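(* In the standing setting, let $(A,B,R,\sigma)$ be a normalized context. If $\mathcal{FC}\neq\varnothing$, then there exists a family $\{(g_i,f_i)\}_{i\in I}\subseteq\mathcal{FC}$ such that $B=\bigcup_{i\in I}B_i^\top$ with $B_i^\top\cap B_j^\top=\varnothing$ for all $i\ne j$; $B=\bigcup_{i\in I}B_i^\bot$ with $B_i^\bot\cap B_j^\bot=\varnothing$ for all $i\ne j$; $A=\bigcup_{i\in I}A_i^\top$ with $A_i^\top\cap A_j^\top=\varnothing$ for all $i\ne j$; $A=\bigcup_{i\in I}A_i^\bot$ with $A_i^\bot\cap A_j^\bot=\varnothing$ for all $i\ne j$.
   Context: Adjoint triple: for posets $(P_1,\le_1),(P_2,\le_2),(P_3,\le_3)$, maps $\&\colon P_1\times P_2\to P_3$, $\swarrow\colon P_3\times P_2\to P_1$, $\nwarrow\colon P_3\times P_1\to P_2$ with $x\le_1 z\swarrow y \iff x\,\&\,y\le_3 z \iff y\le_2 z\nwarrow x$ for all $x,y,z$. For lower-bounded posets, $\&$ has zero-divisors if there are $x\ne\bot_1$, $y\neq\bot_2$ with $x\,\&\,y=\bot_3$. Standing setting: $(L_1,\preceq_1,\bot_1,\top_1)$ and $(L_2,\preceq_2,\bot_2,\top_2)$ are complete lattices and $(P,\le,\bot,\top)$ is a bounded poset. A multi-adjoint frame consists of adjoint triples $(\&_i,\swarrow^i,\nwarrow_i)$, $i=1,\dots,n$, with respect to $L_1,L_2,P$; a property-oriented frame consists of adjoint triples $(\&^p_j,\swarrow_p^j,\nwarrow^p_j)$, $j=1,\dots,m$,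 with respect to $P,L_2,L_1$; an object-oriented frame consists of adjoint triples $(\&^o_k,\swarrow_o^k,\nwarrow^o_k)$, $k=1,\dots,s$, with respect to $L_1,P,L_2$. All conjunctors $\&_i,\&^p_j,\&^o_k$ have no zero-divisors. A context $(A,B,R,\sigma)$ consists of non-empty sets $A,B$, $R\colon A\times B\to P$, and maps $\sigma,\sigma_p,\sigma_o$ from $A\times B$ to the index sets of the three frames. It is normalized if every $a\in A$ has $b_1,b_2\in B$ with $R(a,b_1)\ne\bot$, $R(a,b_2)=\bot$, and every $b\in B$ has $a_1,a_2\in A$ with $R(a_1,b)\neq\bot$, $R(a_2,b)=\bot$. Fuzzy necessity operators: $g^{\uparrow_N}(a)=\inf\{g(b)\swarrow_o^{\sigma_o(a,b)}R(a,b)\mid b\in B\}$ for $g\in L_2^B$, and $f^{\downarrow^N}(b)=\inf\{f(a)\nwarrow^p_{\sigma_p(a,b)}R(a,b)\mid a\in A\}$ for $f\in L_1^A$. $\mathcal F_N=\{(g,f)\mid g\in L_2^B,\ f\in L_1^A,\ g^{\uparrow_N}=f,\ f^{\downarrow^N}=g\}$. For $X\subseteq B$, $\chi_X\in L_2^B$ takes value $\top_2$ on $X$ and $\bot_2$ elsewhere; for $Y\subseteq A$, $\chi_Y\in L_1^A$ takes value $\top_1$ on $Y$ and $\bot_1$ elsewhere. $\mathcal{FC}=\{(\chi_X,\chi_Y)\in\mathcal F_N\mid \varnothing\ne X\subsetneq B,\ \varnothing\neq Y\subsetneq A\}$. For $(g_i,f_i)\in\mathcal{FC}$: $B_i^\top=\{b\mid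 g_i(b)=\top_2\}$, $B_i^\bot=\{b\mid g_i(b)=\bot_2\}$, $A_i^\top=\{a\mid f_i(a)=\top_1\}$, $A_i^\bot=\{a\mid f_i(a)=\bot_1\}$. *)

(* Defs.v *)
From Stdlib Require Import ClassicalDescription.

Record CLattice := {
  cl_car :> Type;
  cl_le : cl_car -> cl_car -> Prop;
  cl_refl : forall x, cl_le x x;
  cl_antisym : forall x y, cl_le x y -> cl_le y x -> x = y;
  cl_trans : forall x y z, cl_le x y -> cl_le y z -> cl_le x z;
  cl_inf : (cl_car -> Prop) -> cl_car;
  cl_inf_lb : forall (S : cl_car -> Prop) x, S x -> cl_le (cl_inf S) x;
  cl_inf_glb : forall (S : cl_car -> Prop) y,
      (forall x, S x -> cl_le y x) -> cl_le y (cl_inf S)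
}.

Definition cl_bot (L : CLattice) : L := cl_inf L (fun _ => True).
Definition cl_top (L : CLattice) : L := cl_inf L (fun _ => False).

Definition cl_inf_fam (L : CLattice) (I : Type) (F : I -> L) : L :=
  cl_inf L (fun x => exists i, x = F i).

Record BPoset := {
  bp_car :> Type;
  bp_le : bp_car -> bp_car -> Prop;
  bp_refl : forall x, bp_le x x;
  bp_antisym : forall x y, bp_le x y -> bp_le y x -> x = y;
  bp_trans : forall x y z, bp_le x y -> bp_le y z -> bp_le x z;
  bp_bot : bp_car;
  bp_top : bp_car;
  bp_bot_le : forall x, bp_le bp_bot x;
  bp_le_top : forall x, bp_le x bp_top
}.

Definition adjoint_triple (P1 P2 P3 : Type)
  (le1 : P1 -> P1 -> Prop) (le2 : P2 -> P2 -> Prop) (le3 : P3 -> P3 -> Prop)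
  (conj : P1 -> P2 -> P3) (sw : P3 -> P2 -> P1) (nw : P3 -> P1 -> P2) : Prop :=
  forall x y z,
    (le1 x (sw z y) <-> le3 (conj x y) z) /\ (le3 (conj x y) z <-> le2 y (nw z x)).

Definition no_zero_divisors (P1 P2 P3 : Type) (bot1 : P1) (bot2 : P2) (bot3 : P3)
  (conj : P1 -> P2 -> P3) : Prop :=
  forall x y, x <> bot1 -> y <> bot2 -> conj x y <> bot3.

Definition idx (n : nat) := {k : nat | k < n}.

Definition normalized (P : BPoset) (A B : Type) (R : A -> B -> P) : Prop :=
  (forall a, exists b1 b2, R a b1 <> bp_bot P /\ R a b2 = bp_bot P) /\
  (forall b, exists a1 a2, R a1 b <> bp_bot P /\ R a2 b = bp_bot P).

Definition up_N (L1 L2 : CLattice) (P : BPoset) (s : nat) (A B : Type)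
  (R : A -> B -> P) (sigma_o : A -> B -> idx s)
  (sw_o : idx s -> L2 -> P -> L1) (g : B -> L2) : A -> L1 :=
  fun a => cl_inf_fam L1 B (fun b => sw_o (sigma_o a b) (g b) (R a b)).

Definition down_N (L1 L2 : CLattice) (P : BPoset) (m : nat) (A B : Type)
  (R : A -> B -> P) (sigma_p : A -> B -> idx m)
  (nw_p : idx m -> L1 -> P -> L2) (f : A -> L1) : B -> L2 :=
  fun b => cl_inf_fam L2 A (fun a => nw_p (sigma_p a b) (f a) (R a b)).

Definition chi (L : CLattice) (T : Type) (X : T -> Prop) : T -> L :=
  fun t => if excluded_middle_informative (X t) then cl_top L else cl_bot L.

Definition nonempty_proper (T : Type) (X : T -> Prop) : Prop :=
  (exists t, X t) /\ (exists t, ~ X t).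

Definition in_FN (L1 L2 : CLattice) (P : BPoset) (m s : nat) (A B : Type)
  (R : A -> B -> P) (sigma_p : A -> B -> idx m) (sigma_o : A -> B -> idx s)
  (nw_p : idx m -> L1 -> P -> L2) (sw_o : idx s -> L2 -> P -> L1)
  (g : B -> L2) (f : A -> L1) : Prop :=
  up_N L1 L2 P s A B R sigma_o sw_o g = f /\
  down_N L1 L2 P m A B R sigma_p nw_p f = g.

Definition in_FC (L1 L2 : CLattice) (P : BPoset) (m s : nat) (A B : Type)
  (R : A -> B -> P) (sigma_p : A -> B -> idx m) (sigma_o : A -> B -> idx s)
  (nw_p : idx m -> L1 -> P -> L2) (sw_o : idx s -> L2 -> P -> L1)
  (g : B -> L2) (f : A -> L1) : Prop :=
  in_FN L1 L2 P m s A B R sigma_p sigma_o nw_p sw_o g f /\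
  exists (X : B -> Prop) (Y : A -> Prop),
    nonempty_proper B X /\ nonempty_proper A Y /\
    g = chi L2 B X /\ f = chi L1 A Y.

(* Main.v *)
Require Import Defs.
From Stdlib Require Import ClassicalDescription Classical FunctionalExtensionality.

Lemma le_top (L : CLattice) (x : L) : cl_le L x (cl_top L).
Proof. apply cl_inf_glb. intros _ []. Qed.

Lemma bot_le (L : CLattice) (x : L) : cl_le L (cl_bot L) x.
Proof. apply cl_inf_lb. exact I. Qed.

Lemma inf_fam_top (L : CLattice) (I : Type) (F : I -> L) :
  (forall i, F i = cl_top L) -> cl_inf_fam L I F = cl_top L.
Proof.
  intro H. apply cl_antisym. apply le_top.
  apply cl_inf_glb. intros x [i ->]. rewrite H. apply cl_refl.
Qed.

Lemma inf_fam_bot (L : CLattice) (I : Type) (F : I -> L) (i : I) :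
  F i = cl_bot L -> cl_inf_fam L I F = cl_bot L.
Proof.
  intro H. apply cl_antisym. 2: apply bot_le.
  rewrite <- H. apply cl_inf_lb. exists i. reflexivity.
Qed.

Lemma chi_in (L : CLattice) (T : Type) (Z : T -> Prop) t : Z t -> chi L T Z t = cl_top L.
Proof. intro h. unfold chi. destruct (excluded_middle_informative (Z t)); tauto. Qed.

Lemma chi_out (L : CLattice) (T : Type) (Z : T -> Prop) t : ~ Z t -> chi L T Z t = cl_bot L.
Proof. intro h. unfold chi. destruct (excluded_middle_informative (Z t)); tauto. Qed.

Lemma chi_cases (L : CLattice) (T : Type) (Z : T -> Prop) t :
  chi L T Z t = cl_top L \/ chi L T Z t = cl_bot L.
Proof. unfold chi. destruct (excluded_middle_informative (Z t)); tauto. Qed.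

Lemma sw_top (L1 : CLattice) (P : BPoset) (L2 : CLattice) conj sw nw
  (H : adjoint_triple L1 P L2 (cl_le L1) (bp_le P) (cl_le L2) conj sw nw) y :
  sw (cl_top L2) y = cl_top L1.
Proof.
  apply cl_antisym. apply le_top. apply (proj1 (H _ _ _)). apply le_top.
Qed.

Lemma sw_bot_z (L1 : CLattice) (P : BPoset) (L2 : CLattice) conj sw nw
  (H : adjoint_triple L1 P L2 (cl_le L1) (bp_le P) (cl_le L2) conj sw nw) :
  sw (cl_bot L2) (bp_bot P) = cl_top L1.
Proof.
  apply cl_antisym. apply le_top. apply (proj1 (H _ _ _)).
  apply (proj2 (proj2 (H _ _ _))). apply bp_bot_le.
Qed.

Lemma sw_bot_nz (L1 : CLattice) (P : BPoset) (L2 : CLattice) conj sw nw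
  (H : adjoint_triple L1 P L2 (cl_le L1) (bp_le P) (cl_le L2) conj sw nw)
  (H0 : no_zero_divisors L1 P L2 (cl_bot L1) (bp_bot P) (cl_bot L2) conj) y :
  y <> bp_bot P -> sw (cl_bot L2) y = cl_bot L1.
Proof.
  intro hy. apply cl_antisym. 2: apply bot_le.
  set (x := sw (cl_bot L2) y).
  assert (hc : cl_le L2 (conj x y) (cl_bot L2)).
  { apply (proj1 (H _ _ _)). apply cl_refl. }
  assert (he : conj x y = cl_bot L2) by (apply cl_antisym; [exact hc | apply bot_le]).
  destruct (classic (x = cl_bot L1)) as [e|ne].
  - rewrite e. apply cl_refl.
  - exfalso. exact (H0 x y ne hy he).
Qed.

Lemma nw_top (L1 : CLattice) (P : BPoset) (L2 : CLattice) conj sw nw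
  (H : adjoint_triple P L2 L1 (bp_le P) (cl_le L2) (cl_le L1) conj sw nw) x :
  nw (cl_top L1) x = cl_top L2.
Proof.
  apply cl_antisym. apply le_top. apply (proj1 (proj2 (H _ _ _))). apply le_top.
Qed.

Lemma nw_bot_z (L1 : CLattice) (P : BPoset) (L2 : CLattice) conj sw nw
  (H : adjoint_triple P L2 L1 (bp_le P) (cl_le L2) (cl_le L1) conj sw nw) :
  nw (cl_bot L1) (bp_bot P) = cl_top L2.
Proof.
  apply cl_antisym. apply le_top. apply (proj1 (proj2 (H _ _ _))).
  apply (proj1 (H _ _ _)). apply bp_bot_le.
Qed.

Lemma nw_bot_nz (L1 : CLattice) (P : BPoset) (L2 : CLattice) conj sw nw
  (H : adjoint_triple P L2 L1 (bp_le P) (cl_le L2) (cl_le L1) conj sw nw)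
  (H0 : no_zero_divisors P L2 L1 (bp_bot P) (cl_bot L2) (cl_bot L1) conj) x :
  x <> bp_bot P -> nw (cl_bot L1) x = cl_bot L2.
Proof.
  intro hx. apply cl_antisym. 2: apply bot_le.
  set (y := nw (cl_bot L1) x).
  assert (hc : cl_le L1 (conj x y) (cl_bot L1)).
  { apply (proj2 (proj2 (H _ _ _))). apply cl_refl. }
  assert (he : conj x y = cl_bot L1) by (apply cl_antisym; [exact hc | apply bot_le]).
  destruct (classic (y = cl_bot L2)) as [e|ne].
  - rewrite e. apply cl_refl.
  - exfalso. exact (H0 x y hx ne he).
Qed.

Lemma bool_partition (L : CLattice) (T : Type) (Z : T -> Prop)
  (hne : cl_top L <> cl_bot L) :
  let G := fun i : bool => if i then chi L T Z else chi L T (fun t => ~ Z t) in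
  (forall b, exists i, G i b = cl_top L) /\
  (forall i j, i <> j -> forall b, ~ (G i b = cl_top L /\ G j b = cl_top L)) /\
  (forall b, exists i, G i b = cl_bot L) /\
  (forall i j, i <> j -> forall b, ~ (G i b = cl_bot L /\ G j b = cl_bot L)).
Proof.
  intro G. split; [|split; [|split]].
  - intro b. destruct (classic (Z b)).
    + exists true. simpl. now apply chi_in.
    + exists false. simpl. now apply chi_in.
  - intros [] [] hij b [h1 h2]; try (apply hij; reflexivity); simpl in *;
    destruct (classic (Z b)) as [z|z].
    + rewrite (chi_out L T (fun t => ~ Z t)) in h2 by tauto. congruence.
    + rewrite chi_out in h1 by tauto. congruence.
    + rewrite (chi_out L T (fun t => ~ Z t)) in h1 by tauto. congruence.
    + rewrite chi_out in h2 by tauto. congruence.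
  - intro b. destruct (classic (Z b)).
    + exists false. simpl. apply chi_out. tauto.
    + exists true. simpl. now apply chi_out.
  - intros [] [] hij b [h1 h2]; try (apply hij; reflexivity); simpl in *;
    destruct (classic (Z b)) as [z|z].
    + rewrite chi_in in h1 by tauto. congruence.
    + rewrite (chi_in L T (fun t => ~ Z t)) in h2 by tauto. congruence.
    + rewrite chi_in in h2 by tauto. congruence.
    + rewrite (chi_in L T (fun t => ~ Z t)) in h1 by tauto. congruence.
Qed.

Theorem mainTheorem6
  (L1 L2 : CLattice) (P : BPoset)
  (* multi-adjoint frame: triples w.r.t. L1, L2, P *)
  (n : nat) (conj : idx n -> L1 -> L2 -> P) (sw : idx n -> P -> L2 -> L1)
  (nw : idx n -> P -> L1 -> L2)
  (H_frame : forall i, adjoint_triple L1 L2 P (cl_le L1) (cl_le L2) (bp_le P)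
                         (conj i) (sw i) (nw i))
  (H_frame0 : forall i, no_zero_divisors L1 L2 P (cl_bot L1) (cl_bot L2) (bp_bot P)
                          (conj i))
  (* property-oriented frame: triples w.r.t. P, L2, L1 *)
  (m : nat) (conj_p : idx m -> P -> L2 -> L1) (sw_p : idx m -> L1 -> L2 -> P)
  (nw_p : idx m -> L1 -> P -> L2)
  (H_pframe : forall j, adjoint_triple P L2 L1 (bp_le P) (cl_le L2) (cl_le L1)
                          (conj_p j) (sw_p j) (nw_p j))
  (H_pframe0 : forall j, no_zero_divisors P L2 L1 (bp_bot P) (cl_bot L2) (cl_bot L1)
                           (conj_p j))
  (* object-oriented frame: triples w.r.t. L1, P, L2 *)
  (s : nat) (conj_o : idx s -> L1 -> P -> L2) (sw_o : idx s -> L2 -> P -> L1)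
  (nw_o : idx s -> L2 -> L1 -> P)
  (H_oframe : forall k, adjoint_triple L1 P L2 (cl_le L1) (bp_le P) (cl_le L2)
                          (conj_o k) (sw_o k) (nw_o k))
  (H_oframe0 : forall k, no_zero_divisors L1 P L2 (cl_bot L1) (bp_bot P) (cl_bot L2)
                           (conj_o k))
  (* context *)
  (A B : Type) (HA : inhabited A) (HB : inhabited B) (R : A -> B -> P)
  (sigma : A -> B -> idx n) (sigma_p : A -> B -> idx m) (sigma_o : A -> B -> idx s)
  (Hnorm : normalized P A B R)
  (HFC : exists (g : B -> L2) (f : A -> L1),
           in_FC L1 L2 P m s A B R sigma_p sigma_o nw_p sw_o g f) :
  exists (I : Type) (G : I -> B -> L2) (F : I -> A -> L1),
    (forall i, in_FC L1 L2 P m s A B R sigma_p sigma_o nw_p sw_o (G i) (F i)) /\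
    (* B = union of the B_i^top, pairwise disjoint *)
    (forall b, exists i, G i b = cl_top L2) /\
    (forall i j, i <> j -> forall b, ~ (G i b = cl_top L2 /\ G j b = cl_top L2)) /\
    (* B = union of the B_i^bot, pairwise disjoint *)
    (forall b, exists i, G i b = cl_bot L2) /\
    (forall i j, i <> j -> forall b, ~ (G i b = cl_bot L2 /\ G j b = cl_bot L2)) /\
    (* A = union of the A_i^top, pairwise disjoint *)
    (forall a, exists i, F i a = cl_top L1) /\
    (forall i j, i <> j -> forall a, ~ (F i a = cl_top L1 /\ F j a = cl_top L1)) /\
    (* A = union of the A_i^bot, pairwise disjoint *)
    (forall a, exists i, F i a = cl_bot L1) /\
    (forall i j, i <> j -> forall a, ~ (F i a = cl_bot L1 /\ F j a = cl_bot L1)).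
Proof.
  destruct HFC as (g & f & [[Hup Hdown] (X & Y & hX & hY & -> & ->)]).
  assert (upT : forall (Z : B -> Prop) a, (forall b, ~ Z b -> R a b = bp_bot P) ->
            up_N L1 L2 P s A B R sigma_o sw_o (chi L2 B Z) a = cl_top L1).
  { intros Z a h. unfold up_N. apply inf_fam_top. intro b.
    destruct (classic (Z b)) as [z|z].
    - rewrite chi_in by exact z. eapply sw_top; apply H_oframe.
    - rewrite chi_out by exact z. rewrite (h b z). eapply sw_bot_z; apply H_oframe. }
  assert (upB : forall (Z : B -> Prop) a b, ~ Z b -> R a b <> bp_bot P ->
            up_N L1 L2 P s A B R sigma_o sw_o (chi L2 B Z) a = cl_bot L1).
  { intros Z a b z h. unfold up_N. apply inf_fam_bot with b.
    rewrite chi_out by exact z. eapply sw_bot_nz; [apply H_oframe | apply H_oframe0 | exact h]. }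
  assert (downT : forall (Z : A -> Prop) b, (forall a, ~ Z a -> R a b = bp_bot P) ->
            down_N L1 L2 P m A B R sigma_p nw_p (chi L1 A Z) b = cl_top L2).
  { intros Z b h. unfold down_N. apply inf_fam_top. intro a.
    destruct (classic (Z a)) as [z|z].
    - rewrite chi_in by exact z. eapply nw_top; apply H_pframe.
    - rewrite chi_out by exact z. rewrite (h a z). eapply nw_bot_z; apply H_pframe. }
  assert (downB : forall (Z : A -> Prop) a b, ~ Z a -> R a b <> bp_bot P ->
            down_N L1 L2 P m A B R sigma_p nw_p (chi L1 A Z) b = cl_bot L2).
  { intros Z a b z h. unfold down_N. apply inf_fam_bot with a.
    rewrite chi_out by exact z. eapply nw_bot_nz; [apply H_pframe | apply H_pframe0 | exact h]. }
  destruct (classic (cl_top L2 = cl_bot L2)) as [e2|n2].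
  - assert (e1 : cl_top L1 = cl_bot L1).
    { destruct hY as [_ [a0 na0]].
      assert (hu : up_N L1 L2 P s A B R sigma_o sw_o (chi L2 B X) a0 = cl_top L1).
      { unfold up_N. apply inf_fam_top. intro b.
        assert (hc : chi L2 B X b = cl_top L2) by (destruct (chi_cases L2 B X b); congruence).
        rewrite hc. eapply sw_top; apply H_oframe. }
      rewrite Hup in hu. rewrite chi_out in hu by exact na0. congruence. }
    exists unit, (fun _ => chi L2 B X), (fun _ => chi L1 A Y).
    split; [intros _; split; [split; assumption | exists X, Y; tauto] |].
    split; [|split; [|split; [|split; [|split; [|split; [|split]]]]]].
    + intro b. exists tt. destruct (chi_cases L2 B X b); congruence.
    + intros [] [] h. exfalso; apply h; reflexivity.
    + intro b. exists tt. destruct (chi_cases L2 B X b); congruence.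
    + intros [] [] h. exfalso; apply h; reflexivity.
    + intro a. exists tt. destruct (chi_cases L1 A Y a); congruence.
    + intros [] [] h. exfalso; apply h; reflexivity.
    + intro a. exists tt. destruct (chi_cases L1 A Y a); congruence.
    + intros [] [] h. exfalso; apply h; reflexivity.
  - destruct (classic (cl_top L1 = cl_bot L1)) as [e1|n1].
    + exfalso. destruct hX as [_ [b0 nb0]].
      assert (hd : down_N L1 L2 P m A B R sigma_p nw_p (chi L1 A Y) b0 = cl_top L2).
      { unfold down_N. apply inf_fam_top. intro a.
        assert (hc : chi L1 A Y a = cl_top L1) by (destruct (chi_cases L1 A Y a); congruence).
        rewrite hc. eapply nw_top; apply H_pframe. }
      rewrite Hdown in hd. rewrite chi_out in hd by exact nb0. congruence.
    + assert (charY : forall a, Y a <-> (forall b, ~ X b -> R a b = bp_bot P)).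
      { intro a; split.
        - intros ya b nb. apply NNPP; intro hr. apply n1.
          rewrite <- (chi_in L1 A Y a ya), <- Hup. apply upB with b; assumption.
        - intro h. apply NNPP; intro ny. apply n1.
          rewrite <- (upT X a h), Hup. apply chi_out; exact ny. }
      assert (charX : forall b, X b <-> (forall a, ~ Y a -> R a b = bp_bot P)).
      { intro b; split.
        - intros xb a na. apply NNPP; intro hr. apply n2.
          rewrite <- (chi_in L2 B X b xb), <- Hdown. apply downB with a; assumption.
        - intro h. apply NNPP; intro nx. apply n2.
          rewrite <- (downT Y b h), Hdown. apply chi_out; exact nx. }
      pose proof (bool_partition L2 B X n2) as PB. simpl in PB.
      pose proof (bool_partition L1 A Y n1) as PA. simpl in PA.
      exists bool, (fun i : bool => if i then chi L2 B X else chi L2 B (fun t => ~ X t)),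
        (fun i : bool => if i then chi L1 A Y else chi L1 A (fun t => ~ Y t)).
      split; [| tauto].
      intros [].
      * split; [split; assumption | exists X, Y; tauto].
      * split; [split|].
        -- apply functional_extensionality. intro a.
           destruct (classic (Y a)) as [ya|ya].
           ++ rewrite chi_out by tauto.
              destruct (proj1 Hnorm a) as (b1 & b2 & h1 & h2).
              apply upB with b1; [| exact h1].
              intro nx. apply h1. apply (proj1 (charY a) ya b1). exact nx.
           ++ rewrite chi_in by exact ya. apply upT. intros b nnx.
              apply NNPP in nnx. apply (proj1 (charX b) nnx a ya).
        -- apply functional_extensionality. intro b.
           destruct (classic (X b)) as [xb|xb].
           ++ rewrite chi_out by tauto.
              destruct (proj2 Hnorm b) as (a1 & a2 & h1 & h2).
              apply downB with a1; [| exact h1].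
              intro ny. apply h1. apply (proj1 (charX b) xb a1). exact ny.
           ++ rewrite chi_in by exact xb. apply downT. intros a nny.
              apply NNPP in nny. apply (proj1 (charY a) nny b xb).
        -- exists (fun t => ~ X t), (fun t => ~ Y t).
           destruct hX as [[x1 hx1] [x2 hx2]]. destruct hY as [[y1 hy1] [y2 hy2]].
           split; [split; [exists x2; exact hx2 | exists x1; tauto] |].
           split; [split; [exists y2; exact hy2 | exists y1; tauto] |].
           split; reflexivity.
Qed.
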